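(* Consider the packet spreading algorithm described in the context with $N=2$ and $K_1\ge K_2$. For every iteration $k\in\{0,1,\dots,K-1\}$, letting $i=m_k$ be the source selected in iteration $k$ and $j$ the other source (i.e. $j=3-i$), we have $$\tilde Q_j^{k+1}=\frac{x_j^k+1}{K_j}-\frac{x_i^k}{K_i}.$$
   Context: Packet spreading algorithm: Let $N\ge 2$, let $K_1,\dots,K_N$ be positive integers and $K=\sum_{n=1}^N K_n$. The algorithm runs iterations $k=0,1,\dots,K-1$ and maintains deficit counters $B_n^k$, $1\le n\le N$, with $B_n^0=0$ for all $n$. In iteration $k$, define the quantums $Q_n^k=\frac{(1-B_n^k)K}{K_n}$; select a source $m_k\in\arg\min_{1\le n\le N} Q_n^k$ (ties broken arbitrarily); let $Q=Q_{m_k}^k$; set $B_n^{k+1}=B_n^k+Q\frac{K_n}{K}$ for $n\neq m_k$ and $B_{m_k}^{k+1}=0$; and set the $k$-th entry of the output pattern to $P(k)=m_k$. Normalized quantums: $\tilde Q_n^k=Q_n^k/K=(1-B_n^k)/K_n$. For $0\le k\le K-1$, $x_n^k$ denotes the number of indices $k'\in\{0,\dots,k\}$ with $m_{k'}=n$, i.e. the number of source-$n$ instances inserted into the pattern after iteration $k$. *)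

(* Defs.v *)
From mathcomp Require Import all_boot all_order all_algebra.
Set Implicit Arguments. Unset Strict Implicit. Unset Printing Implicit Defensive.
Import Order.TTheory GRing.Theory Num.Theory.
Local Open Scope ring_scope.

(* K n : the (positive) number of packets of source n; Ktot = sum of K n.
   m k : the source selected in iteration k (the tie-breaking is left free:
         validity of a run is the hypothesis [valid_run] below). *)
Section PacketSpreading.
Variables (R : realFieldType) (N : nat) (K : 'I_N -> nat).

Definition Ktot : nat := (\sum_(n < N) K n)%N.

Definition quantum (B : 'I_N -> R) (n : 'I_N) : R :=
  (1 - B n) * (Ktot%:R) / (K n)%:R.

Definition nquantum (B : 'I_N -> R) (n : 'I_N) : R :=
  (1 - B n) / (K n)%:R.

Fixpoint deficit (m : nat -> 'I_N) (k : nat) : 'I_N -> R :=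
  match k with
  | 0 => fun _ => 0
  | k'.+1 => fun n =>
      let Bk := deficit m k' in
      if n == m k' then 0
      else Bk n + quantum Bk (m k') * (K n)%:R / (Ktot%:R)
  end.

Definition valid_run (m : nat -> 'I_N) : Prop :=
  forall k, (k < Ktot)%N ->
    forall n, quantum (deficit m k) (m k) <= quantum (deficit m k) n.

Definition inserted (m : nat -> 'I_N) (n : 'I_N) (k : nat) : nat :=
  (\sum_(0 <= k' < k.+1) (m k' == n))%N.

End PacketSpreading.

(* Main.v *)
Require Import Defs.
From mathcomp Require Import all_boot all_order all_algebra.
From mathcomp Require Import ring zify.
Set Implicit Arguments. Unset Strict Implicit. Unset Printing Implicit Defensive.
Import Order.TTheory GRing.Theory Num.Theory.
Local Open Scope ring_scope.

Definition cnt N (m : nat -> 'I_N) (n : 'I_N) (k : nat) : nat :=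
  (\sum_(0 <= k' < k) (m k' == n))%N.

Definition TT (R : realFieldType) N (K : 'I_N -> nat) (m : nat -> 'I_N) (k : nat) : R :=
  match k with 0 => 0 | k'.+1 => (cnt m (m k') k)%:R / (K (m k'))%:R end.

Lemma cntS N (m : nat -> 'I_N) n k : cnt m n k.+1 = (cnt m n k + (m k == n))%N.
Proof. by rewrite /cnt big_nat_recr. Qed.

Lemma invariant (R : realFieldType) N (K : 'I_N -> nat) (m : nat -> 'I_N) :
  (forall n, (0 < K n)%N) ->
  forall k n, nquantum K (deficit R K m k) n =
    ((cnt m n k).+1)%:R / (K n)%:R - TT R K m k.
Proof.
move=> Kpos k; elim: k => [|k IH] n.
  by rewrite /nquantum /TT /cnt big_geq //=; rewrite !subr0.
have Kn0 : forall p, (K p)%:R != 0 :> R.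
  by move=> p; rewrite pnatr_eq0 -lt0n Kpos.
have Kt0 : (Ktot K)%:R != 0 :> R.
  rewrite pnatr_eq0 -lt0n /Ktot.
  have := Kpos n; rewrite (bigD1 n) //=; lia.
rewrite /nquantum /=; case: (eqVneq n (m k)) => [->|nk].
  rewrite /TT cntS eqxx addn1 subr0; field; exact: Kn0.
have -> : (1 - (deficit R K m k n + quantum K (deficit R K m k) (m k) * (K n)%:R / (Ktot K)%:R)) / (K n)%:R
  = nquantum K (deficit R K m k) n - nquantum K (deficit R K m k) (m k).
  rewrite /nquantum /quantum; field; apply/and3P; split; exact: Kn0 || exact: Kt0.
have nk' : (m k == n) = false by rewrite eq_sym; apply/negbTE.
rewrite !IH /TT !cntS eqxx nk' addn0 addn1.
field; apply/andP; split; exact: Kn0.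
Qed.

Theorem mainTheorem2 (R : realFieldType) (K : 'I_2 -> nat) (m : nat -> 'I_2) :
  (forall n, (0 < K n)%N) ->
  (K ord0 >= K ord_max)%N ->
  valid_run R K m ->
  forall k : nat, (k < Ktot K)%N ->
  forall i j : 'I_2, i = m k -> j != i ->
    nquantum K (deficit R K m k.+1) j =
      ((inserted m j k).+1)%:R / (K j)%:R - (inserted m i k)%:R / (K i)%:R.
Proof.
move=> Kpos _ _ k _ i j -> _.
by rewrite invariant.
Qed.
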